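(* Let $n \geq 10$, $l = \lfloor n/2 \rfloor$, let $V$ be a real vector space with basis $\varepsilon_1,\dots,\varepsilon_l$, and let $\Delta = \{\sum_{i=1}^l k_i\varepsilon_i \mid k_i \in \{0,\pm1\}\} \setminus \{0\}$ (the root system of the Cartan type Lie superalgebra $H(n)$). Then $\Delta$ has a parabolic subset which is not strongly parabolic.
   Context: A subset $P \subset \Delta$ is parabolic if $\Delta = P \cup -P$ and $\alpha,\beta\in P$, $\alpha+\beta\in\Delta$ imply $\alpha+\beta\in P$. A triangular decomposition $\Delta = \Delta^-\sqcup\Delta^0\sqcup\Delta^+$ is given by some $\lambda\in V^*$ via $\Delta^0 = \Delta\cap\ker\lambda$, $\Delta^\pm = \{\alpha\in\Delta \mid \lambda(\alpha)\gtrless0\}$. $P \subset \Delta$ is strongly parabolic (recursively) if $P = \Delta$, or $P = P^0\sqcup\Delta^+$ for some triangular decomposition (with function $\lambda$) and some $P^0\subset\Delta^0$ which is strongly parabolic as a subset of $\Delta^0$ regarded in the vector space $\ker\lambda$. *)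

(* Defs.v *)
From mathcomp Require Import all_boot all_order all_algebra.
From mathcomp Require Import all_classical all_reals.
Set Implicit Arguments. Unset Strict Implicit. Unset Printing Implicit Defensive.
Import Order.TTheory GRing.Theory Num.Theory.
Local Open Scope ring_scope.
Local Open Scope classical_set_scope.

(* The linear functional on R^l with coefficient row c. Every element of
   V^* is of this form. *)
Definition lin (R : realType) (l : nat) (c a : 'rV[R]_l) : R :=
  \sum_(i < l) c ord0 i * a ord0 i.

Definition DeltaH (R : realType) (l : nat) : set 'rV[R]_l :=
  [set a | a <> 0 /\ forall i : 'I_l,
      a ord0 i = 0 \/ a ord0 i = 1 \/ a ord0 i = -1].

Definition parabolic (R : realType) (l : nat) (D P : set 'rV[R]_l) : Prop :=
  P `<=` D /\
  D = P `|` [set - a | a in P] /\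
  (forall a b, P a -> P b -> D (a + b) -> P (a + b)).

Definition Dzero (R : realType) (l : nat) (D : set 'rV[R]_l) (c : 'rV[R]_l)
  : set 'rV[R]_l := [set a | D a /\ lin c a = 0].
Definition Dpos (R : realType) (l : nat) (D : set 'rV[R]_l) (c : 'rV[R]_l)
  : set 'rV[R]_l := [set a | D a /\ 0 < lin c a].

(* The subspace ker lambda is treated inside the fixed V:
   every functional on ker lambda is the restriction of a functional on V. *)
Inductive strongly_parabolic (R : realType) (l : nat)
  : set 'rV[R]_l -> set 'rV[R]_l -> Prop :=
| SP_full (D : set 'rV[R]_l) : strongly_parabolic D D
| SP_step (D : set 'rV[R]_l) (c : 'rV[R]_l) (P0 : set 'rV[R]_l) :
    P0 `<=` Dzero D c ->
    strongly_parabolic (Dzero D c) P0 ->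
    strongly_parabolic D (P0 `|` Dpos D c).

(* Main.v *)
Require Import Defs.
From mathcomp Require Import all_boot all_order all_algebra.
From mathcomp Require Import all_classical all_reals.
From mathcomp Require Import lra.
Import Order.TTheory GRing.Theory Num.Theory.
Local Open Scope ring_scope.
Local Open Scope classical_set_scope.

Lemma lin_add {R : realType} {l : nat} (c a b : 'rV[R]_l) :
  lin c (a + b) = lin c a + lin c b.
Proof. by rewrite /lin -big_split; apply: eq_bigr => i _; rewrite mxE mulrDr. Qed.

Lemma lin_opp {R : realType} {l : nat} (c a : 'rV[R]_l) : lin c (- a) = - lin c a.
Proof. by rewrite /lin -sumrN; apply: eq_bigr => i _; rewrite mxE mulrN. Qed.

Lemma lin0 {R : realType} {l : nat} (c : 'rV[R]_l) : lin c 0 = 0.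
Proof. by rewrite /lin big1 // => i _; rewrite mxE mulr0. Qed.

Lemma sp_inv {R : realType} {l : nat} (D P : set 'rV[R]_l) :
  strongly_parabolic D P ->
  forall a b c d, P a -> P b -> P c -> P d -> a + b + c + d = 0 ->
  D (- a) -> P (- a).
Proof.
elim=> {D P} [D|D c P0 sub _ IH] a b c' d Pa Pb Pc Pd abcd Dna; first by [].
have ge0 x : (P0 `|` Dpos D c) x -> 0 <= lin c x.
  by case=> [/sub [_ ->]|[_ /ltW]].
have H : lin c a + lin c b + lin c c' + lin c d = 0 by rewrite -!lin_add abcd lin0.
have ha := ge0 _ Pa; have hb := ge0 _ Pb; have hc := ge0 _ Pc; have hd := ge0 _ Pd.
have la : lin c a = 0 by lra.
have lb : lin c b = 0 by lra.
have lc : lin c c' = 0 by lra.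
have ld : lin c d = 0 by lra.
have inP0 x : (P0 `|` Dpos D c) x -> lin c x = 0 -> P0 x.
  by move=> [//|[_ h]] e; rewrite e ltxx in h.
left; apply: (IH a b c' d) => //; try exact: inP0.
by split => //; rewrite lin_opp la oppr0.
Qed.

Definition vals : seq int := [:: -1; 0; 1].

Definition Dv {R : realType} (x : R) := x = 0 \/ x = 1 \/ x = -1.

Definition zc {R : realType} (x : R) : int :=
  if x == 1 then 1 else if x == -1 then -1 else 0.

Lemma zc0 {R : realType} : zc (0 : R) = 0.
Proof.
rewrite /zc; have -> : ((0:R) == 1) = false by apply/eqP; lra.
by have -> : ((0:R) == -1) = false by apply/eqP; lra.
Qed.

Lemma zc1 {R : realType} : zc (1 : R) = 1.
Proof. by rewrite /zc eqxx. Qed.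

Lemma zcN1 {R : realType} : zc (-1 : R) = -1.
Proof.
rewrite /zc; have -> : ((-1:R) == 1) = false by apply/eqP; lra.
by rewrite eqxx.
Qed.

Lemma zc_in {R : realType} (x : R) : zc x \in vals.
Proof. by rewrite /zc; case: ifP => _ //; case: ifP. Qed.

Lemma zc_add {R : realType} (x y : R) :
  Dv x -> Dv y -> Dv (x + y) -> zc (x + y) = zc x + zc y.
Proof.
move=> [->|[->|->]] [->|[->|->]] Hs;
  rewrite ?addr0 ?add0r ?addrN ?addNr ?zc0 ?zc1 ?zcN1 //;
  by exfalso; case: Hs => [|[]]; lra.
Qed.

Lemma zc_opp {R : realType} (x : R) : Dv x -> zc (- x) = - zc x.
Proof. by move=> [->|[->|->]]; rewrite ?oppr0 ?opprK ?zc0 ?zc1 ?zcN1. Qed.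

Lemma zc_int {R : realType} (z : int) : z \in vals -> zc (z%:~R : R) = z.
Proof.
by rewrite !inE => /or3P [] /eqP ->; rewrite ?rmorphN /= ?zc0 ?zc1 ?zcN1.
Qed.

Lemma Dv_int {R : realType} (z : int) : z \in vals -> Dv (z%:~R : R).
Proof.
by rewrite !inE => /or3P [] /eqP ->; rewrite ?rmorphN /=; rewrite /Dv; auto.
Qed.

Definition coef {R : realType} {l : nat} (a : 'rV[R]_l) (k : nat) : R :=
  oapp (fun i : 'I_l => a ord0 i) 0 (insub k).

Lemma coefD {R : realType} {l : nat} (a b : 'rV[R]_l) k :
  coef (a + b) k = coef a k + coef b k.
Proof. by rewrite /coef; case: insubP => [i _ _|_] /=; rewrite ?mxE ?addr0. Qed.

Lemma coefN {R : realType} {l : nat} (a : 'rV[R]_l) k :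
  coef (- a) k = - coef a k.
Proof. by rewrite /coef; case: insubP => [i _ _|_] /=; rewrite ?mxE ?oppr0. Qed.

Lemma coef0 {R : realType} {l : nat} k : coef (0 : 'rV[R]_l) k = 0.
Proof. by rewrite /coef; case: insubP => [i _ _|_] /=; rewrite ?mxE. Qed.

Lemma coef_D {R : realType} {l : nat} (a : 'rV[R]_l) k :
  DeltaH a -> Dv (coef a k).
Proof.
move=> [_ H]; rewrite /coef; case: insubP => [i _ _|_] /=; first exact: H.
by left.
Qed.

Definition hz {R : realType} {l : nat} (a : 'rV[R]_l) : seq int :=
  [:: zc (coef a 0); zc (coef a 1); zc (coef a 2); zc (coef a 3); zc (coef a 4)].

Definition addz (s t : seq int) : seq int := [seq x.1 + x.2 | x <- zip s t].
Definition negz (s : seq int) : seq int := [seq - x | x <- s].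

Lemma hz_add {R : realType} {l : nat} (a b : 'rV[R]_l) :
  DeltaH a -> DeltaH b -> DeltaH (a + b) -> hz (a + b) = addz (hz a) (hz b).
Proof.
move=> Da Db Dab; rewrite /hz /addz /= !coefD.
rewrite !zc_add //; try by apply: coef_D.
all: by rewrite -coefD; apply: coef_D.
Qed.

Lemma hz_opp {R : realType} {l : nat} (a : 'rV[R]_l) :
  DeltaH a -> hz (- a) = negz (hz a).
Proof. by move=> Da; rewrite /hz /negz /= !coefN !zc_opp //; apply: coef_D. Qed.

Lemma hz0 {R : realType} {l : nat} : hz (0 : 'rV[R]_l) = [:: 0; 0; 0; 0; 0].
Proof. by rewrite /hz !coef0 zc0. Qed.

Lemma DeltaH_nz {R : realType} {l : nat} (a : 'rV[R]_l) :
  DeltaH a -> a != 0.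
Proof.
move=> [nz _]; apply/eqP => E; apply: nz; rewrite E.
by apply/funext => i; apply/funext => j; rewrite mxE.
Qed.

Lemma DN {R : realType} {l : nat} (a : 'rV[R]_l) : DeltaH a -> DeltaH (- a).
Proof.
move=> [nz H]; split.
  move=> E; apply: nz; apply/funext => i; apply/funext => j.
  have := congr1 (fun f => f i j) E => /=; rewrite mxE => /eqP.
  by rewrite oppr_eq0 => /eqP ->.
move=> i; rewrite mxE; case: (H i) => [->|[->|->]]; rewrite ?oppr0 ?opprK; auto.
Qed.

Definition W (s : seq int) : int :=
  nth 0 s 0 + 2 * nth 0 s 1 + 3 * nth 0 s 2 + 4 * nth 0 s 3 + 6 * nth 0 s 4.

Definition QT : seq (seq int) :=
  [:: [:: -1; 0; 1; 1; -1]; [:: -1; 1; -1; -1; 1]; [:: 0; 1; 0; 1; -1];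
      [:: 1; -1; -1; 1; 0]; [:: 1; 0; 1; -1; 0]; [:: 1; 1; -1; 0; 0];
      [:: 1; 1; 1; 0; -1]].

Definition Pz (s : seq int) : bool :=
  (s == [:: 0; 0; 0; 0; 0]) || (0 < W s) || (s \in QT).

Definition A5 (p : seq int -> bool) : bool :=
  all (fun x0 => all (fun x1 => all (fun x2 => all (fun x3 => all (fun x4 =>
    p [:: x0; x1; x2; x3; x4]) vals) vals) vals) vals) vals.

Lemma A5P (p : seq int -> bool) : A5 p ->
  forall x0 x1 x2 x3 x4, x0 \in vals -> x1 \in vals -> x2 \in vals ->
  x3 \in vals -> x4 \in vals -> p [:: x0; x1; x2; x3; x4].
Proof.
move=> H x0 x1 x2 x3 x4 h0 h1 h2 h3 h4.
by move/allP/(_ _ h0)/allP/(_ _ h1)/allP/(_ _ h2)/allP/(_ _ h3)/allP/(_ _ h4): H.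
Qed.

Definition invz (s : seq int) : bool := all (fun x => x \in vals) s.

Lemma check_closed : A5 (fun s => A5 (fun t =>
  Pz s ==> Pz t ==> invz (addz s t) ==> Pz (addz s t))).
Proof. by vm_compute. Qed.

Lemma check_tot : A5 (fun s => Pz s || Pz (negz s)).
Proof. by vm_compute. Qed.

Lemma hz_ok {R : realType} {l : nat} (a : 'rV[R]_l) (p : seq int -> bool) :
  A5 p -> p (hz a).
Proof. by move=> H; apply: A5P => //; apply: zc_in. Qed.

Definition Pex {R : realType} {l : nat} : set 'rV[R]_l :=
  [set a | DeltaH a /\ Pz (hz a)].

Lemma invz_hz {R : realType} {l : nat} (a : 'rV[R]_l) : invz (hz a).
Proof. by rewrite /invz /= !zc_in. Qed.

Lemma Pex_parabolic {R : realType} {l : nat} : parabolic (@DeltaH R l) Pex.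
Proof.
split; first by move=> a [].
split.
  apply/seteqP; split.
    move=> a Da.
    have := @hz_ok R l a _ check_tot; case/orP => H; [by left | right].
    exists (- a); last by rewrite opprK.
    split; first exact: DN.
    by rewrite hz_opp //; move: H; rewrite /hz /negz /=.
  by move=> a [Pa|[b Pb <-]]; [case: Pa | apply: DN; case: Pb].
move=> a b [Da Pa] [Db Pb] Dab; split => //.
have H := @hz_ok R l a _ check_closed.
have := @hz_ok R l b _ H; rewrite Pa Pb -hz_add // invz_hz.
by [].
Qed.

Definition mkv {R : realType} {l : nat} (s : seq int) : 'rV[R]_l :=
  \row_(i < l) (nth 0 s i)%:~R.

Lemma coef_mkv {R : realType} {l : nat} (s : seq int) k :
  (size s <= l)%N -> coef (mkv s : 'rV[R]_l) k = (nth 0 s k)%:~R.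
Proof.
move=> Hs; rewrite /coef; case: insubP => [i _ <-|] /=; first by rewrite mxE.
rewrite -leqNgt => hk; by rewrite nth_default ?(leq_trans Hs hk).
Qed.

Lemma hz_mkv {R : realType} {l : nat} x0 x1 x2 x3 x4 : (5 <= l)%N ->
  x0 \in vals -> x1 \in vals -> x2 \in vals -> x3 \in vals -> x4 \in vals ->
  hz (mkv [:: x0; x1; x2; x3; x4] : 'rV[R]_l) = [:: x0; x1; x2; x3; x4].
Proof.
by move=> hl h0 h1 h2 h3 h4; rewrite /hz !coef_mkv //= !zc_int.
Qed.

Lemma nth_vals (s : seq int) k : invz s -> nth 0 s k \in vals.
Proof.
move=> /allP H; case: (ltnP k (size s)) => hk; first by apply: H; apply: mem_nth.
by rewrite nth_default.
Qed.

Lemma D_mkv {R : realType} {l : nat} x0 x1 x2 x3 x4 : (5 <= l)%N ->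
  x0 \in vals -> x1 \in vals -> x2 \in vals -> x3 \in vals -> x4 \in vals ->
  [:: x0; x1; x2; x3; x4] != [:: 0; 0; 0; 0; 0] ->
  DeltaH (mkv [:: x0; x1; x2; x3; x4] : 'rV[R]_l).
Proof.
move=> hl h0 h1 h2 h3 h4 nz; split.
  move=> E; move: nz; rewrite -(hz_mkv (R:=R) (l:=l)) //.
  have -> : (mkv [:: x0; x1; x2; x3; x4] : 'rV[R]_l) = 0.
    apply/matrixP => i j; have := congr1 (fun f => f i j) E => /= ->.
    by rewrite mxE.
  by rewrite hz0 eqxx.
move=> i; rewrite mxE; apply: Dv_int; apply: nth_vals.
by rewrite /invz /= h0 h1 h2 h3 h4.
Qed.

Definition s1 : seq int := [:: -1; 0; 1; 1; -1].
Definition s2 : seq int := [:: -1; 1; -1; -1; 1].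
Definition s3 : seq int := [:: 1; -1; -1; 1; 0].
Definition s4 : seq int := [:: 1; 0; 1; -1; 0].

Theorem mainTheorem4 (R : realType) (n : nat) :
  (10 <= n)%N ->
  exists P : set 'rV[R]_(n./2),
    parabolic (@DeltaH R n./2) P /\ ~ strongly_parabolic (@DeltaH R n./2) P.
Proof.
move=> hn; have hl : (5 <= n./2)%N by apply: (half_leq hn).
exists Pex; split; first exact: Pex_parabolic.
move=> SP.
have Pv (s : seq int) : s \in [:: s1; s2; s3; s4] ->
    Pex (mkv s : 'rV[R]_(n./2)).
  rewrite !inE => /or4P [] /eqP ->; split;
    (apply: D_mkv => // || by rewrite hz_mkv).
have sum0 : (mkv s1 + mkv s2 + mkv s3 + mkv s4 : 'rV[R]_(n./2)) = 0.
  apply/rowP => i; rewrite !mxE -!intrD.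
  have Hz : forall k, nth 0 s1 k + nth 0 s2 k + nth 0 s3 k + nth 0 s4 k = 0 :> int.
    by case=> [|[|[|[|[|k]]]]]; rewrite /= ?nth_nil.
  by rewrite Hz.
have D1 : DeltaH (mkv s1 : 'rV[R]_(n./2)) by apply: D_mkv.
have h1 := Pv s1 isT; have h2 := Pv s2 isT; have h3 := Pv s3 isT; have h4 := Pv s4 isT.
have [_] := @sp_inv R _ _ _ SP _ _ _ _ h1 h2 h3 h4 sum0 (DN _ D1).
by rewrite hz_opp // hz_mkv.
Qed.
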